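(* Consider $N$ atoms at positions $\mathbf q_1,\dots,\mathbf q_N\in\mathbb R^3$ with $\mathbf r_{ij}=\mathbf q_i-\mathbf q_j$, radii $0<r_c<r_s$, skin $\Delta r\ge0$, batch size $p\ge1$, and a nonnegative electron density function $\rho$ with $\rho(|\mathbf r_{ij}|):=0$ when $|\mathbf r_{ij}|>r_s$. Let $\bar\rho_i=\sum_{j\ne i,|\mathbf r_{ij}|\le r_s}\rho(|\mathbf r_{ij}|)$. Suppose a half neighbor list is given: for every unordered pair $\{i,j\}$, $i\ne j$, with $|\mathbf r_{ij}|\le r_s+\Delta r$, exactly one of the two atoms is listed as a neighbor of the other. For each atom $k$ let $\mathfrak R_k^c$ be the listed neighbors $j$ of $k$ with $|\mathbf r_{kj}|\le r_c$, $\mathfrak R_k^s$ the listed neighbors $j$ of $k$ with $r_c<|\mathbf r_{kj}|\le r_s+\Delta r$, $N_k^s=|\mathfrak R_k^s|$, and let $\mathfrak B_k$ be a uniformly random subset of $\mathfrak R_k^s$ of size $p$ (with $\mathfrak B_k=\mathfrak R_k^s$ and $N_k^s/p$ replaced by $1$ if $N_k^s\le p$), the batches for different $k$ being independent. Define $$\tilde{\bar\rho}_i=\sum_{j\in\mathfrak R_i^c}\rho(|\mathbf r_{ij}|)+\sum_{j'\ne i:\ i\in\mathfrak R_{j'}^c}\rho(|\mathbf r_{j'i}|)+\frac{N_i^s}{p}\sum_{j\in\mathfrak B_i}\rho(|\mathbf r_{ji}|)+\sum_{j'\ne i:\ i\in\mathfrak B_{j'}}\frac{N_{j'}^s}{p}\rho(|\mathbf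 r_{j'i}|),$$ and $\mathcal Q_i=\tilde{\bar\rho}_i-\bar\rho_i$. Then $\mathbb E[\mathcal Q_i]=0$ and the variance of $\mathcal Q_i$ is bounded.
   Context: This is the random batch list approximation of the host electron density of the embedded atom method (EAM) potential, adapted to a Newton-pair (half neighbor list) implementation in which each pair interaction is computed once and its contribution copied to the other atom. Expectation and variance are over the random batch choices, with positions fixed. *)

(* Defs.v *)
From HB Require Import structures.
From mathcomp Require Import all_boot all_order all_algebra.
From mathcomp Require Import reals.
Set Implicit Arguments. Unset Strict Implicit. Unset Printing Implicit Defensive.
Import Order.TTheory GRing.Theory Num.Theory.
Local Open Scope ring_scope.

Section EAM.
Variable R : realType.
Variable N : nat.
Variable q : 'I_N -> 'rV[R]_3.

Definition dist (i j : 'I_N) : R :=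
  Num.sqrt (\sum_(k < 3) (q i 0 k - q j 0 k) ^+ 2).

Variables (rc rs dr : R) (p : nat) (rho : R -> R).
(* half neighbor list: nbr k = atoms listed as neighbors of k *)
Variable nbr : 'I_N -> {set 'I_N}.

Definition Rc (k : 'I_N) : {set 'I_N} := [set j in nbr k | dist k j <= rc].
Definition Rs (k : 'I_N) : {set 'I_N} :=
  [set j in nbr k | (rc < dist k j) && (dist k j <= rs + dr)].
Definition Ns (k : 'I_N) : nat := #|Rs k|.

(* admissible batches for atom k: subsets of R_k^s of size p,
   or R_k^s itself when N_k^s <= p *)
Definition adm (k : 'I_N) : {set {set 'I_N}} :=
  [set B : {set 'I_N} | (B \subset Rs k) && (#|B| == minn p (Ns k))].

Definition batches := {ffun 'I_N -> {set 'I_N}}.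

(* product of independent uniform laws on adm k *)
Definition weight (B : batches) : R :=
  \prod_(k < N) (if B k \in adm k then (#|adm k|%:R)^-1 else 0).

Definition Expect (X : batches -> R) : R := \sum_(B : batches) weight B * X B.
Definition Variance (X : batches -> R) : R :=
  Expect (fun B => (X B - Expect X) ^+ 2).

Definition coef (k : 'I_N) : R :=
  if (Ns k <= p)%N then 1 else (Ns k)%:R / p%:R.

Definition rhobar (i : 'I_N) : R :=
  \sum_(j < N | (j != i) && (dist i j <= rs)) rho (dist i j).

Definition rhotilde (i : 'I_N) (B : batches) : R :=
    \sum_(j in Rc i) rho (dist i j)
  + \sum_(j' < N | (j' != i) && (i \in Rc j')) rho (dist j' i)
  + coef i * \sum_(j in B i) rho (dist j i)
  + \sum_(j' < N | (j' != i) && (i \in B j')) coef j' * rho (dist j' i).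

Definition Qi (i : 'I_N) (B : batches) : R := rhotilde i B - rhobar i.

Definition rhomax (i : 'I_N) : R :=
  \big[Num.max/0]_(j < N | j != i) rho (dist i j).

End EAM.

(* Main.v *)
Require Import Defs.
From HB Require Import structures.
From mathcomp Require Import all_boot all_order all_algebra.
From mathcomp Require Import reals.
From mathcomp Require Import ring lra.
Import Order.TTheory GRing.Theory Num.Theory.
Local Open Scope ring_scope.
Set Implicit Arguments. Unset Strict Implicit. Unset Printing Implicit Defensive.

Section Pf.
Variable R : realType.
Variable N : nat.
Variable q : 'I_N -> 'rV[R]_3.
Variables (rc rs dr : R) (p : nat) (rho : R -> R).
Variable nbr : 'I_N -> {set 'I_N}.
Hypothesis Hp : (0 < p)%N.

Local Notation dist := (dist q).
Local Notation Rs := (Rs q rc rs dr nbr).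
Local Notation Rc := (Rc q rc nbr).
Local Notation Ns := (Ns q rc rs dr nbr).
Local Notation adm := (adm q rc rs dr p nbr).
Local Notation coef := (coef q rc rs dr p nbr).
Local Notation Expect := (Expect q rc rs dr p nbr).

Lemma dist_sym i j : dist i j = dist j i.
Proof. rewrite /Defs.dist; congr Num.sqrt; apply: eq_bigr => k _; by rewrite -sqrrN opprB. Qed.

Definition w k S : R := if S \in adm k then (#|adm k|%:R)^-1 else 0.
Definition avg k (f : {set 'I_N} -> R) := \sum_S w k S * f S.
Definition ind (j : 'I_N) (S : {set 'I_N}) : R := if j \in S then 1 else 0.

Lemma card_adm k : #|adm k| = 'C(Ns k, minn p (Ns k)).
Proof. rewrite /Defs.adm /Defs.Ns. exact: cards_draws. Qed.

Lemma adm_gt0 k : (0 < #|adm k|)%N.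
Proof. by rewrite card_adm bin_gt0 geq_minr. Qed.

Lemma avgE k f : avg k f = (#|adm k|%:R)^-1 * \sum_(S in adm k) f S.
Proof.
rewrite /avg [in RHS]big_mkcond [RHS]mulr_sumr; apply: eq_bigr => S _.
by rewrite /w; case: (S \in adm k); rewrite ?mul0r ?mulr0.
Qed.

Lemma avg_cst k c : avg k (fun _ => c) = c.
Proof.
rewrite avgE sumr_const -[c *+ _]mulr_natr mulrCA mulVf ?mulr1 //.
by rewrite pnatr_eq0 -lt0n adm_gt0.
Qed.

Lemma avgZl k c f : avg k (fun S => c * f S) = c * avg k f.
Proof. rewrite /avg mulr_sumr; apply: eq_bigr => S _; by rewrite mulrCA. Qed.

Lemma avgB k f g : avg k (fun S => f S - g S) = avg k f - avg k g.
Proof. rewrite /avg -sumrB; apply: eq_bigr => S _; by rewrite mulrBr. Qed.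

Lemma avgD k f g : avg k (fun S => f S + g S) = avg k f + avg k g.
Proof. rewrite /avg -big_split; apply: eq_bigr => S _; by rewrite mulrDr. Qed.

Lemma avg_sum k (F : 'I_N -> {set 'I_N} -> R) :
  avg k (fun S => \sum_j F j S) = \sum_j avg k (F j).
Proof.
rewrite /avg [RHS]exchange_big /=; apply: eq_bigr => S _; by rewrite mulr_sumr.
Qed.

Lemma avg_le k f g : (forall S, S \in adm k -> f S <= g S) -> avg k f <= avg k g.
Proof.
move=> H; rewrite /avg; apply: ler_sum => S _; rewrite /w.
case: ifP => hS; last by rewrite !mul0r.
by apply: ler_wpM2l; [rewrite invr_ge0 ler0n | exact: H].
Qed.

Lemma Eprod (H : 'I_N -> {set 'I_N} -> R) :
  Expect (fun B => \prod_n H n (B n)) = \prod_n avg n (H n).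
Proof.
rewrite /Defs.Expect /avg [RHS]bigA_distr_bigA /=; apply: eq_bigr => B _.
by rewrite /weight -big_split.
Qed.

Lemma E_single m f : Expect (fun B => f (B m)) = avg m f.
Proof.
transitivity (Expect (fun B => \prod_n (if n == m then f else fun _ => 1) (B n))).
  rewrite /Defs.Expect; apply: eq_bigr => B _; congr (_ * _).
  rewrite (bigD1 m) //= eqxx big1 ?mulr1 //.
  by move=> n /negbTE ->.
rewrite (Eprod (fun n => if n == m then f else fun _ => 1)) (bigD1 m) //= eqxx big1 ?mulr1 //.
by move=> n /negbTE ->; exact: avg_cst.
Qed.

Lemma E_pair m l f g : m != l ->
  Expect (fun B => f (B m) * g (B l)) = avg m f * avg l g.
Proof.
move=> nml.
pose H n := if n == m then f else if n == l then g else fun _ => 1.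
have lm : l != m by rewrite eq_sym.
transitivity (Expect (fun B => \prod_n H n (B n))).
  rewrite /Defs.Expect; apply: eq_bigr => B _; congr (_ * _).
  rewrite (bigD1 m) //= (bigD1 l) //= /H eqxx (negbTE lm) eqxx big1 ?mulr1 //.
  by move=> n /andP[/negbTE -> /negbTE ->].
rewrite (Eprod H) (bigD1 m) //= (bigD1 l) //= /H eqxx (negbTE lm) eqxx big1 ?mulr1 //.
by move=> n /andP[/negbTE -> /negbTE ->]; exact: avg_cst.
Qed.

Lemma E_sum (F : 'I_N -> _ -> R) :
  Expect (fun B => \sum_(m < N) F m B) = \sum_m Expect (F m).
Proof.
rewrite /Defs.Expect [RHS]exchange_big; apply: eq_bigr => B _; by rewrite mulr_sumr.
Qed.

Lemma coef_gt0 k : 0 < coef k.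
Proof.
rewrite /Defs.coef; case: ifP => h; first exact: ltr01.
apply: divr_gt0; rewrite ltr0n //.
by apply: leq_ltn_trans (leq0n p) _; rewrite ltnNge h.
Qed.

Lemma coef_min k : coef k * (minn p (Ns k))%:R = (Ns k)%:R.
Proof.
rewrite /Defs.coef; case: ifP => h.
  by rewrite mul1r (minn_idPr h).
have /minn_idPl -> : (p <= Ns k)%N by apply: ltnW; rewrite ltnNge h.
by rewrite divfK // pnatr_eq0 -lt0n.
Qed.


Lemma avg_ind k j : coef k * avg k (ind j) = if j \in Rs k then 1 else 0.
Proof.
rewrite avgE; case: ifP => hj; last first.
  rewrite big1 ?mulr0 // => S; rewrite inE => /andP[sub _]; rewrite /ind.
  by case: ifP => // jS; rewrite (subsetP sub _ jS) in hj.
set n := Ns k; set kk := minn p n.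
have c0 : #|[set S in adm k | j \notin S]| = 'C(n.-1, kk).
  have -> : n.-1 = #|Rs k :\ j| by rewrite /n /Defs.Ns (cardsD1 j (Rs k)) hj.
  rewrite -cards_draws; apply: eq_card => S; rewrite !inE subsetD1.
  by case: (S \subset Rs k); case: (j \notin S); case: (#|S| == kk).
have c1 : (#|[set S in adm k | j \in S]| + #|[set S in adm k | j \notin S]| = #|adm k|)%N.
  rewrite -(cardsID [set S : {set 'I_N} | j \in S] (adm k)); congr (_ + _); apply: eq_card => S;
  by rewrite !inE andbC.
have -> : \sum_(S in adm k) ind j S = #|[set S in adm k | j \in S]|%:R.
  rewrite /ind -big_mkcondr /=.
  rewrite (eq_bigl (fun S => S \in [set S in adm k | j \in S])); last by move=> S; rewrite !inE.
  by rewrite sumr_const.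
have n0 : (0 < n)%N by rewrite /n /Defs.Ns (cardsD1 j (Rs k)) hj.
have kk0 : (0 < kk)%N by rewrite /kk leq_min Hp n0.
have Cpos := adm_gt0 k.
have cm := coef_min k.
move: c0 c1 Cpos cm; rewrite card_adm -/n -/kk.
case: n n0 kk kk0 => // n' _ [//|kk'] _ /= c0 c1 Cpos cm.
have e1 : #|[set S in adm k | j \in S]| = 'C(n', kk') by move: c1; rewrite binS c0 addnC => /addnI.
rewrite e1.
have e2 := mul_bin_diag n'.+1 kk'; rewrite /= in e2.
have e3 : ('C(n', kk')%:R : R) = kk'.+1%:R * 'C(n'.+1, kk'.+1)%:R / n'.+1%:R.
  by rewrite -natrM -e2 natrM mulrC mulrA mulVf ?mul1r // pnatr_eq0.
rewrite e3.
have Cn : ('C(n'.+1, kk'.+1)%:R : R) != 0 by rewrite pnatr_eq0 -lt0n.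
have nn : (n'.+1%:R : R) != 0 by rewrite pnatr_eq0.
transitivity (coef k * kk'.+1%:R / n'.+1%:R); first by field; rewrite nat1r nn Cn.
by rewrite cm divff.
Qed.

Lemma avg_ext k f g : (forall S, f S = g S) -> avg k f = avg k g.
Proof. by move=> H; rewrite /avg; apply: eq_bigr => S _; rewrite H. Qed.

Lemma Expect_ext X Y : (forall B, X B = Y B) -> Expect X = Expect Y.
Proof. by move=> H; rewrite /Defs.Expect; apply: eq_bigr => B _; rewrite H. Qed.

Lemma sum_in_ind (S : {set 'I_N}) (F : 'I_N -> R) : \sum_(j in S) F j = \sum_j F j * ind j S.
Proof.
by rewrite big_mkcond; apply: eq_bigr => j _; rewrite /ind; case: ifP; rewrite ?mulr1 ?mulr0.
Qed.

Hypothesis Hr0 : forall r, 0 <= rho r.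
Hypothesis Hrz : forall r, rs < r -> rho r = 0.
Hypothesis Hdr : 0 <= dr.
Hypothesis Hn : forall k : 'I_N, k \notin nbr k.
Hypothesis Hx : forall i j : 'I_N, i != j -> dist i j <= rs + dr ->
     (j \in nbr i) != (i \in nbr j).

Variable i : 'I_N.

Definition g j := rho (dist j i).
Definition Z m (S : {set 'I_N}) := if m == i then coef i * \sum_(j in S) g j else coef m * g m * ind i S.
Definition mu m := if m == i then \sum_(j in Rs i) g j else (if i \in Rs m then g m else 0).
Definition D m (S : {set 'I_N}) := Z m S - mu m.

Lemma avgZ m : avg m (Z m) = mu m.
Proof.
rewrite /Z /mu; case: eqP => [->|_].
  rewrite (@avg_ext i _ (fun S => coef i * \sum_j g j * ind j S)); last first.
    by move=> S; rewrite sum_in_ind.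
  rewrite avgZl avg_sum mulr_sumr [RHS]big_mkcond; apply: eq_bigr => j _.
  by rewrite avgZl mulrCA avg_ind; case: ifP; rewrite ?mulr1 ?mulr0.
rewrite avgZl -mulrA [g m * _]mulrC mulrA avg_ind.
by case: ifP; rewrite ?mul1r ?mul0r.
Qed.

Lemma avgD0 m : avg m (D m) = 0.
Proof. by rewrite /D (avgB m (Z m) (fun _ => mu m)) avg_cst avgZ subrr. Qed.

Lemma rhotildeE B : rhotilde q rc rs dr p rho nbr i B =
  \sum_(j in Rc i) rho (dist i j)
  + \sum_(j' < N | (j' != i) && (i \in Rc j')) rho (dist j' i)
  + \sum_m Z m (B m).
Proof.
rewrite /rhotilde [X in _ = _ + X](bigD1 i) //= /Z eqxx -!addrA; congr (_ + (_ + (_ + _))).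
rewrite big_mkcondr /=; apply: eq_bigr => m /negbTE ->.
by rewrite /ind /g; case: ifP; rewrite ?mulr1 ?mulr0.
Qed.

Lemma iRs : (i \in Rs i) = false.
Proof. by rewrite inE (negbTE (Hn i)). Qed.

Lemma mean_id : \sum_(j in Rc i) rho (dist i j)
  + \sum_(j' < N | (j' != i) && (i \in Rc j')) rho (dist j' i)
  + \sum_m mu m = rhobar q rs rho i.
Proof.
rewrite [X in _ + X = _](bigD1 i) //= /mu eqxx.
have e4 : \sum_(m | m != i) (if m == i then \sum_(j in Rs i) g j
               else (if i \in Rs m then g m else 0))
   = \sum_j (if (j != i) && (i \in Rs j) then rho (dist i j) else 0).
  rewrite big_mkcond; apply: eq_bigr => j _ /=.
  case: eqP => [->|nj] //=; rewrite /g (dist_sym j i) //.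
rewrite e4.
have e1 : \sum_(j in Rc i) rho (dist i j) = \sum_j (if j \in Rc i then rho (dist i j) else 0).
  by rewrite big_mkcond.
have e2 : \sum_(j' < N | (j' != i) && (i \in Rc j')) rho (dist j' i)
   = \sum_j (if (j != i) && (i \in Rc j) then rho (dist i j) else 0).
  by rewrite big_mkcond; apply: eq_bigr => j _; rewrite (dist_sym j i).
have e3 : \sum_(j in Rs i) g j = \sum_j (if j \in Rs i then rho (dist i j) else 0).
  by rewrite big_mkcond; apply: eq_bigr => j _; rewrite /g (dist_sym j i).
have e5 : rhobar q rs rho i = \sum_j (if (j != i) && (dist i j <= rs) then rho (dist i j) else 0).
  by rewrite /rhobar big_mkcond.
rewrite e1 e2 e3 e5 -!big_split; apply: eq_bigr => j _ /=.
rewrite !inE (dist_sym j i).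
case: (eqVneq j i) => [->|nji].
  by rewrite (negbTE (Hn i)) /= !addr0.
rewrite /=.
case: (boolP (dist i j <= rs)) => hd.
  have hd' : dist i j <= rs + dr by apply: le_trans hd _; rewrite lerDl.
  have hx : (j \in nbr i) != (i \in nbr j) by apply: Hx; rewrite // eq_sym.
  move: hx; rewrite hd'.
  rewrite (ltNge rc (dist i j)).
  by case: (j \in nbr i); case: (i \in nbr j); case: (dist i j <= rc) => //= *; lra.
have -> : rho (dist i j) = 0 by apply: Hrz; rewrite ltNge.
by rewrite !if_same !addr0.
Qed.


Lemma Qsum B : Qi q rc rs dr p rho nbr i B = \sum_m D m (B m).
Proof.
rewrite /Qi rhotildeE -mean_id /D sumrB; lra.
Qed.

Lemma EQ0 : Expect (Qi q rc rs dr p rho nbr i) = 0.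
Proof.
rewrite (Expect_ext Qsum) (E_sum (fun m B => D m (B m))).
rewrite big1 // => m _; rewrite (E_single m (D m)); exact: avgD0.
Qed.

Lemma VarE : Variance q rc rs dr p nbr (Qi q rc rs dr p rho nbr i) =
  \sum_m avg m (fun S => D m S * D m S).
Proof.
rewrite /Variance EQ0.
rewrite (Expect_ext (Y := fun B => \sum_m \sum_l D m (B m) * D l (B l))); last first.
  move=> B; rewrite subr0 Qsum expr2 mulr_suml; apply: eq_bigr => m _.
  by rewrite mulr_sumr.
rewrite (E_sum (fun m B => \sum_l D m (B m) * D l (B l))); apply: eq_bigr => m _.
rewrite (E_sum (fun l B => D m (B m) * D l (B l))).
rewrite (bigD1 m) //= big1 ?addr0.
  exact: (E_single m (fun S => D m S * D m S)).
move=> l lm; rewrite (E_pair (D m) (D l)); last by rewrite eq_sym.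
by rewrite avgD0 mul0r.
Qed.


Local Notation M := (rhomax q rho i).

Lemma gM j : j != i -> 0 <= g j <= M.
Proof.
move=> ji; rewrite /g Hr0 /= (dist_sym j i) /rhomax.
exact: (@le_bigmax_cond _ _ _ 0 j (fun k => k != i) (fun j => rho (dist i j))).
Qed.

Lemma Rs_ne j : j \in Rs i -> j != i.
Proof.
rewrite inE => /andP[h _]; apply: contraTneq h => ->; exact: Hn.
Qed.

Lemma sum_bound (A : {set 'I_N}) : A \subset Rs i ->
  0 <= \sum_(j in A) g j <= M * #|A|%:R.
Proof.
move=> sA; apply/andP; split; first by apply: sumr_ge0 => j _; exact: Hr0.
rewrite mulr_natr -sumr_const; apply: ler_sum => j jA.
by have /andP[_ ->] := gM (Rs_ne (subsetP sA _ jA)).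
Qed.

Lemma Vi : avg i (fun S => D i S * D i S) <= M ^+ 2 * (Ns i)%:R ^+ 2.
Proof.
set c := M * (Ns i)%:R.
have hmu : 0 <= mu i <= c by rewrite /mu eqxx; exact: sum_bound (subxx _).
rewrite (_ : M ^+ 2 * (Ns i)%:R ^+ 2 = c ^+ 2); last by rewrite /c exprMn.
rewrite -(avg_cst i (c ^+ 2)); apply: avg_le => S.
rewrite inE => /andP[sS /eqP cS].
have hz : 0 <= Z i S <= c.
  rewrite /Z eqxx; have /andP[s0 s1] := sum_bound sS; rewrite cS in s1.
  have cp := coef_gt0 i; have cm := coef_min i.
  apply/andP; split; first by rewrite mulr_ge0 // ltW.
  apply: le_trans (ler_wpM2l (ltW cp) s1) _.
  by rewrite /c -cm mulrCA.
rewrite /D; move: hz hmu => /andP[? ?] /andP[? ?]; nra.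
Qed.

Lemma Vm m : m != i -> avg m (fun S => D m S * D m S) =
  if i \in Rs m then g m ^+ 2 * (coef m - 1) else 0.
Proof.
move=> mi.
set c := coef m * g m; set u := mu m.
rewrite (@avg_ext m _ (fun S => (c ^+ 2 - 2 * c * u) * ind i S + u ^+ 2)); last first.
  by move=> S; rewrite /D /Z (negbTE mi) /ind -/c -/u; case: ifP => _; ring.
rewrite avgD avgZl avg_cst.
have ai := avg_ind m i; have cp := coef_gt0 m.
have cn : coef m != 0 by rewrite gt_eqF.
rewrite /u /mu (negbTE mi).
case: ifP => h; rewrite h in ai.
  have -> : avg m (ind i) = (coef m)^-1.
    by apply: (mulfI cn); rewrite ai divff.
  rewrite /c; field; exact: cn.
have -> : avg m (ind i) = 0 by apply: (mulfI cn); rewrite ai mulr0.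
by rewrite mulr0 add0r expr2 mulr0.
Qed.

Lemma Vm_bound m : m != i -> i \in Rs m ->
  g m ^+ 2 * (coef m - 1) <= M ^+ 2 * ((Ns m)%:R / p%:R).
Proof.
move=> mi h; have /andP[g0 gm] := gM mi.
have hc : 0 <= coef m - 1 <= (Ns m)%:R / p%:R.
  rewrite /Defs.coef; case: ifP => hN.
    by rewrite subrr lexx divr_ge0 ?ler0n.
  have pN : (p < Ns m)%N by rewrite ltnNge hN.
  have p0 : 0 < (p%:R : R) by rewrite ltr0n.
  apply/andP; split; last by rewrite lerBlDr lerDl ler01.
  by rewrite subr_ge0 ler_pdivlMr // mul1r ler_nat ltnW.
move/andP: hc => [c0 c1].
apply: ler_pM => //; first exact: sqr_ge0.
by rewrite !expr2; apply: ler_pM.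
Qed.

Lemma Var_bound : Variance q rc rs dr p nbr (Qi q rc rs dr p rho nbr i) <=
      M ^+ 2 * ((Ns i)%:R ^+ 2 + \sum_(j' < N | i \in Rs j') (Ns j')%:R / p%:R).
Proof.
rewrite VarE (bigD1 i) //= mulrDr; apply: lerD; first exact: Vi.
rewrite mulr_sumr [X in _ <= X]big_mkcond [X in _ <= X](bigD1 i) //= iRs add0r.
apply: ler_sum => m mi; rewrite (Vm mi); case: ifP => hm; last exact: lexx.
exact: Vm_bound.
Qed.

End Pf.

Theorem theorem3 (R : realType) (N : nat) (q : 'I_N -> 'rV[R]_3)
  (rc rs dr : R) (p : nat) (rho : R -> R) (nbr : 'I_N -> {set 'I_N}) :
  0 < rc -> rc < rs -> 0 <= dr -> (0 < p)%N ->
  (forall r, 0 <= rho r) ->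
  (forall r, rs < r -> rho r = 0) ->
  (forall k : 'I_N, k \notin nbr k) ->
  (forall i j : 'I_N, i != j -> dist q i j <= rs + dr ->
     (j \in nbr i) != (i \in nbr j)) ->
  forall i : 'I_N,
    Expect q rc rs dr p nbr (Qi q rc rs dr p rho nbr i) = 0 /\
    Variance q rc rs dr p nbr (Qi q rc rs dr p rho nbr i) <=
      rhomax q rho i ^+ 2 *
        ((Ns q rc rs dr nbr i)%:R ^+ 2
         + \sum_(j' < N | i \in Rs q rc rs dr nbr j')
             (Ns q rc rs dr nbr j')%:R / p%:R).
Proof.
move=> _ _ Hdr Hp Hr0 Hrz Hn Hx i; split; [exact: EQ0 | exact: Var_bound].
Qed.
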